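(* Let $G$ be a finite, connected, simple, bridgeless, triangle-free cubic graph, and let $\Lambda$ be a valid labeling of $\mathfrak{L}_2(G)$. Then the subgraph of $\mathfrak{L}_2(G)$ induced by the set of open edges $\{e : \lambda_e=1\}$ is a disjoint union of cycles.
   Context: For a simple graph $H$, $\mathcal{L}(H)$ denotes its line graph (vertices = edges of $H$, adjacent iff sharing an endpoint). Let $\mathcal{T}$ be the set of triangles of $\mathcal{L}(\mathcal{L}(G))$ of the form $\mathcal{L}(T)$ (the three edges of $T$) for $T$ a triangle of $\mathcal{L}(G)$. The reduced order two line graph $\mathfrak{L}_2(G)$ has the vertex set of $\mathcal{L}(\mathcal{L}(G))$ and the edges of $\mathcal{L}(\mathcal{L}(G))$ not lying in any triangle of $\mathcal{T}$. For each edge $e$ of $G$ (a vertex of $\mathcal{L}(G)$), the four edges of $\mathcal{L}(G)$ incident to $e$ are pairwise adjacent in $\mathcal{L}(\mathcal{L}(G))$; the reduced clique $\mathbb{X}_e$ is the subgraph of $\mathfrak{L}_2(G)$ on these four vertices with all edges of $\mathfrak{L}_2(G)$ between them (it is a 4-cycle). A labeling $\Lambda=(\lambda_f)$ assigns to each edge $f$ of $\mathfrak{L}_2(G)$ a label $\lambda_f\in\{0,1\}$ ($1$ = open, $0$ = closed); it is valid if for every reduced clique $\mathbb{X}$ and every vertex $v$ of $\mathbb{X}$ there are two edges $\langle v,w\rangle,\langle v,u\rangle$ of $\mathbb{X}$ with $\lambda_{\langle v,w\rangle}=1-\lambda_{\langle v,u\rangle}$. *)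

(* Defs.v *)
From mathcomp Require Import all_boot.
Set Implicit Arguments. Unset Strict Implicit. Unset Printing Implicit Defensive.

Section Graphs.
Variable T : finType.
Variable adj : rel T.

Definition simple_graph := symmetric adj /\ irreflexive adj.
Definition connected_graph := forall x y : T, connect adj x y.
Definition cubic := forall x : T, #|[set y | adj x y]| = 3.
Definition triangle_free := forall x y z : T, ~ [&& adj x y, adj y z & adj x z].
Definition bridgeless := forall x y : T, adj x y ->
  connect (fun a b => adj a b && ([set a; b] != [set x; y])) x y.

Definition Gedge (E : {set T}) : bool :=
  [exists x, exists y, adj x y && (E == [set x; y])].

(* line graph L(G): vertices = edges of G, adjacent iff sharing an endpoint *)
Definition L1adj (E F : {set T}) : bool :=
  [&& Gedge E, Gedge F, E != F & E :&: F != set0].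
(* edges of L(G) = vertices of L(L(G)) *)
Definition L1edge (X : {set {set T}}) : bool :=
  [exists E, exists F, L1adj E F && (X == [set E; F])].
Definition L2adj (X Y : {set {set T}}) : bool :=
  [&& L1edge X, L1edge Y, X != Y & X :&: Y != set0].

(* triangles of L(G), and their edges (= vertices of the triangle L(T) of L(L(G))) *)
Definition L1triangle (E1 E2 E3 : {set T}) : bool :=
  [&& L1adj E1 E2, L1adj E2 E3 & L1adj E1 E3].
Definition tri_edges (E1 E2 E3 : {set T}) : {set {set {set T}}} :=
  [set [set E1; E2]; [set E2; E3]; [set E1; E3]].

(* reduced order two line graph: edges of L(L(G)) not lying in any triangle L(T) *)
Definition redadj (X Y : {set {set T}}) : bool :=
  L2adj X Y &&
  ~~ [exists E1, exists E2, exists E3,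
        [&& L1triangle E1 E2 E3, X \in tri_edges E1 E2 E3 & Y \in tri_edges E1 E2 E3]].

(* vertex set of the reduced clique X_E: the edges of L(G) incident to E *)
Definition rclique (E : {set T}) : {set {set {set T}}} :=
  [set X | L1edge X && (E \in X)].

(* a labeling assigns a bit (true = open = 1, false = closed = 0) to each edge
   {V, W} of the reduced line graph; values off edges are irrelevant *)
Definition labeling := {set {set {set T}}} -> bool.

Definition valid_labeling (lam : labeling) : Prop :=
  forall E : {set T}, Gedge E ->
  forall V, V \in rclique E ->
  exists W, exists U,
    [/\ W \in rclique E, U \in rclique E, redadj V W, redadj V U &
        lam [set V; W] != lam [set V; U]].

Definition openadj (lam : labeling) (V W : {set {set T}}) : bool :=
  redadj V W && lam [set V; W].

End Graphs.

(* A simple graph (vertex type S, adjacency r) is a disjoint union of cycles: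
   its vertices (those listed by 'vert') and edges are exactly those of a family
   of vertex-disjoint cycles (each of length >= 3). *)
Definition cycle_edge (S : eqType) (s : seq S) (x y : S) : bool :=
  [&& x \in s, y \in s & (next s x == y) || (next s y == x)].

Definition disjoint_union_of_cycles (S : eqType) (vert : S -> Prop) (r : rel S) : Prop :=
  exists cs : seq (seq S),
    [/\ uniq (flatten cs),
        all (fun s => 3 <= size s) cs,
        (forall x, vert x <-> has (fun s => x \in s) cs) &
        (forall x y, r x y = has (fun s => cycle_edge s x y) cs)].

(* Main.v *)
Require Import Defs.
From mathcomp Require Import all_boot.
Set Implicit Arguments. Unset Strict Implicit. Unset Printing Implicit Defensive.

Section Cyc.
Variable S : finType.

Definition dcp (vert : S -> Prop) (r : rel S) (cs : seq (seq S)) : Prop :=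
  [/\ uniq (flatten cs), all (fun s => 3 <= size s) cs,
      (forall x, vert x <-> has (fun s => x \in s) cs) &
      (forall x y, r x y = has (fun s => cycle_edge s x y) cs)].

Lemma mem_flat (x : S) cs : (x \in flatten cs) = has (fun s => x \in s) cs.
Proof. by elim: cs => //= s cs IH; rewrite mem_cat IH. Qed.

Lemma ce_sym (s : seq S) x y : cycle_edge s x y = cycle_edge s y x.
Proof. by rewrite /cycle_edge andbCA orbC. Qed.

Lemma dcp_perm vert r cs cs' : perm_eq cs cs' -> dcp vert r cs -> dcp vert r cs'.
Proof.
move=> P [U A V E]; split.
- by rewrite -(perm_uniq (perm_flatten P)).
- by rewrite -(perm_all _ P).
- by move=> x; rewrite -(perm_has _ P).
- by move=> x y; rewrite -(perm_has _ P).
Qed.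

Lemma ce_rot (s : seq S) i x y : uniq s -> cycle_edge (rot i s) x y = cycle_edge s x y.
Proof. by move=> u; rewrite /cycle_edge !mem_rot !next_rot. Qed.

Lemma dcp_rot vert r (s : seq S) cs i : dcp vert r (s :: cs) -> dcp vert r (rot i s :: cs).
Proof.
move=> [U A V E].
have UsF : uniq (s ++ flatten cs) by [].
have us : uniq s by move: UsF; rewrite cat_uniq => /and3P[].
split.
- have P : perm_eq (rot i s ++ flatten cs) (s ++ flatten cs) by rewrite perm_cat2r perm_rot.
  by rewrite /= (perm_uniq P).
- by rewrite /= size_rot.
- by move=> x; rewrite /= mem_rot; exact: V.
- by move=> x y; rewrite E /= ce_rot.
Qed.

Lemma rot_next (s : seq S) c d : uniq s -> 3 <= size s -> c \in s -> next s c = d ->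
  exists i q, rot i s = c :: d :: q.
Proof.
move=> us sz cin nx; case: (rot_to cin) => i p Hr.
have := next_rot i us c; rewrite Hr nx.
case: p Hr => [|d' q] Hr.
- by move: sz; rewrite -(size_rot i) Hr.
- by rewrite /next /= eqxx => e; exists i, q; rewrite Hr e.
Qed.

Lemma norm vert r cs a b : dcp vert r cs -> r a b ->
  exists x y q cs2, ((x == a) && (y == b) || (x == b) && (y == a)) /\
                    dcp vert r ((x :: y :: q) :: cs2).
Proof.
move=> D rab; have [U A V E] := D.
move: rab; rewrite E => /hasP [s0 s0in ce].
have D1 := dcp_perm (perm_to_rem s0in) D.
have us : uniq s0 by case: D1 => U1 _ _ _; move: U1; rewrite /= cat_uniq => /and3P[].
have sz : 3 <= size s0 by move/allP: A => /(_ _ s0in).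
move: ce; rewrite /cycle_edge => /and3P [ain bin /orP[] /eqP nx].
- have [i [q Hr]] := rot_next us sz ain nx.
  exists a, b, q, (rem s0 cs); split; first by rewrite !eqxx.
  by rewrite -Hr; exact: dcp_rot.
- have [i [q Hr]] := rot_next us sz bin nx.
  exists b, a, q, (rem s0 cs); split; first by rewrite !eqxx orbT.
  by rewrite -Hr; exact: dcp_rot.
Qed.


Lemma next_neq (s : seq S) v w : v \notin s -> w != v -> next s w != v.
Proof.
move=> vs wv; case ws: (w \in s).
- by apply/eqP => e; move: vs; rewrite -e mem_next ws.
- by rewrite next_nth ws.
Qed.

Lemma boolH (m1 m2 A B zx wy zy wx : bool) :
  (zx && wy -> ~~ B) -> (zy && wx -> ~~ A) ->
  [&& m1, m2 & (A && ~~ (zx && wy)) || (B && ~~ (wx && zy))] =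
  [&& m1, m2 & A || B] && ~~ ((zx && wy) || (zy && wx)).
Proof.
by case: m1 m2 A B zx wy zy wx => [] [] [] [] [] [] [] [] //= h1 h2;
  first [by move: (h1 isT) | by move: (h2 isT)].
Qed.

Lemma insert_step (r r' : rel S) v x y q cs2 :
  symmetric r -> x != y -> (forall z, r v z = (z == x) || (z == y)) -> ~~ r x y ->
  (forall z w, r' z w = (r z w && (z != v) && (w != v)) || ((z == x) && (w == y))
                        || ((z == y) && (w == x))) ->
  (forall w, ~~ r' v w) ->
  dcp (fun z => exists w, r' z w) r' ((x :: y :: q) :: cs2) ->
  dcp (fun z => exists w, r z w) r ((x :: v :: y :: q) :: cs2).
Proof.
move=> sym xy rv nxy r'E r'v D; case: D => U A V E.
set s := x :: y :: q; set F := flatten cs2.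
have vnot : v \notin s ++ F.
  rewrite mem_cat mem_flat; apply/negP => H.
  by have [w] := (proj2 (V v)) H; rewrite (negbTE (r'v w)).
move: vnot; rewrite mem_cat negb_or => /andP [vs vF].
have vx : v != x by apply: contraNneq vs => ->; rewrite inE eqxx.
have vy : v != y by apply: contraNneq vs => ->; rewrite !inE eqxx orbT.
have UsF : uniq (s ++ F) by [].
have us : uniq s by move: UsF; rewrite cat_uniq => /and3P[].
have sz : 3 <= size s by move: A => /= /andP[].
have nF : forall z, z \in s -> z \notin F.
  move=> z zs; move: UsF; rewrite cat_uniq => /and3P [_ /hasPn H _].
  by apply/negP => zF; move: (H z zF); rewrite zs.
have hasF : forall z w, z \in s -> has (fun s0 => cycle_edge s0 z w) cs2 = false.
  move=> z w zs; apply/negbTE/hasPn => s0 s0in; apply/negP => /and3P [zs0 _ _].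
  by move: (nF z zs); rewrite mem_flat; move/hasPn => /(_ s0 s0in) /negP; apply.
have hasFv : forall w, has (fun s0 => cycle_edge s0 v w) cs2 = false.
  move=> w; apply/negbTE/hasPn => s0 s0in; apply/negP => /and3P [zs0 _ _].
  by move: vF; rewrite mem_flat; move/hasPn => /(_ s0 s0in) /negP; apply.
set s' := x :: v :: y :: q.
have nxt1 : forall z, z != x -> z != v -> next s' z = next s z.
  by move=> z zx zv; rewrite /next /= (negbTE zx) (negbTE zv).
have nxtx : next s' x = v by rewrite /next /= eqxx.
have nxtv : next s' v = y by rewrite /next /= (negbTE vx) eqxx.
have nsx : next s x = y by rewrite /next /= eqxx.
have nsy : next s y != x.
  move: sz us; rewrite /s; case Eq: q => [|c q'] //= _.
  rewrite (eq_sym y x) (negbTE xy) eqxx !inE !negb_or => /andP [/and3P [_ xc _] _]; by rewrite eq_sym.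

have mems : forall z, z != v -> (z \in s') = (z \in s).
  by move=> z zv; rewrite /s' /s !inE (negbTE zv).
split.
- rewrite /= -/F in U *; move: U => /andP [xn ->]; rewrite andbT.
  rewrite !inE !mem_cat !negb_or eq_sym vx /=; move: vs vF.
  rewrite /s !inE !negb_or => /and3P [_ -> ->] ->; rewrite !andbT /=. by move: xn; rewrite !inE !mem_cat !negb_or.
- by move: A => /= /andP [_ ->].
- move=> z; case: (z =P v) => [-> | zv].
    by split => _; [rewrite /= !inE eqxx orbT | exists x; rewrite rv eqxx].
  move/eqP: zv => zv; rewrite /= mems // -/s.
  apply: (iff_trans _ (V z)); split => -[w rzw].
  + case: (w =P v) => [wv | /eqP wv].
      move: rzw; rewrite wv sym rv => /orP [] /eqP ->.
        by exists y; rewrite r'E !eqxx orbT.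
      by exists x; rewrite r'E !eqxx !orbT.
    by exists w; rewrite r'E rzw zv wv.
  + move: rzw; rewrite r'E => /orP [/orP [/andP [/andP [rzw _] _] | ] | ].
    * by exists w.
    * by case/andP => /eqP -> _; exists v; rewrite sym rv eqxx.
    * by case/andP => /eqP -> _; exists v; rewrite sym rv eqxx orbT.
have Hv : forall w, r v w = cycle_edge s' v w || has (fun s0 => cycle_edge s0 v w) cs2.
  move=> w; rewrite hasFv orbF rv /cycle_edge nxtv.
  have -> : v \in s' by rewrite /s' !inE eqxx orbT.
  rewrite andTb.
  case: (w =P x) => [-> | /eqP wx].
    by rewrite nxtx !eqxx orbT /s' inE eqxx.
  case: (w =P y) => [-> | /eqP wy].
    by rewrite !eqxx orbT /s' !inE eqxx !orbT.
  rewrite (eq_sym y w) (negbTE wy) orFb.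
  case: (w =P v) => [-> | /eqP wv]; first by rewrite nxtv eq_sym (negbTE vy) andbF.
  by rewrite nxt1 // (negbTE (next_neq vs wv)) andbF.
move=> z w; rewrite /=.
case: (z =P v) => [-> | /eqP zv]; first exact: Hv.
case: (w =P v) => [-> | /eqP wv].
  rewrite sym Hv ce_sym; congr (_ || _); apply: eq_has => s0; exact: ce_sym.
set Exy := ((z == x) && (w == y)) || ((z == y) && (w == x)).
have H1 : r z w = r' z w && ~~ Exy.
  rewrite r'E zv wv !andbT -orbA -/Exy.
  case Ex: Exy; rewrite ?orbT ?andbF ?orbF ?andbT //.
  move: Ex; rewrite /Exy => /orP [] /andP [/eqP -> /eqP ->]; last rewrite sym.
    exact: negbTE.
  exact: negbTE.
have P1 : forall z w, z != v -> w != v ->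
    (next s' z == w) = (next s z == w) && ~~ ((z == x) && (w == y)).
  move=> z0 w0 z0v w0v; case: (z0 =P x) => [-> | /eqP z0x].
    by rewrite nxtx nsx (eq_sym v w0) (negbTE w0v) andTb (eq_sym y w0); case: (w0 == y).
  by rewrite nxt1 // andFb andbT.
have H2 : cycle_edge s' z w = cycle_edge s z w && ~~ Exy.
  rewrite /cycle_edge !mems // (P1 z w) // (P1 w z) // /Exy.
  apply: boolH.
    by case/andP => /eqP -> /eqP ->.
  by case/andP => /eqP -> /eqP ->.
rewrite H1 H2 E /=.
case Ex: Exy; rewrite ?andbT ?andbF //=.
by rewrite hasF //; move: Ex; rewrite /Exy => /orP [] /andP [/eqP -> _];
  rewrite /s !inE eqxx ?orbT.
Qed.


Definition Sup (r : rel S) := [set x | [exists y, r x y]].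
Definition degok (r : rel S) :=
  forall x, #|[set y | r x y]| = 0 \/ #|[set y | r x y]| = 2.

Lemma nbr2 (r : rel S) x c d : degok r -> c != d -> r x c -> r x d ->
  forall y, r x y = (y == c) || (y == d).
Proof.
move=> deg cd rc rd y.
have sub : [set c; d] \subset [set y | r x y].
  by apply/subsetP => z; rewrite !inE => /orP [] /eqP ->.
have c2 : #|[set y | r x y]| = 2.
  case: (deg x) => // /eqP; rewrite cards_eq0 => /eqP e.
  have : c \in [set y | r x y] by rewrite inE.
  by rewrite e inE.
have e : [set c; d] = [set y | r x y].
  by apply/eqP; rewrite eqEcard sub c2 cards2 cd.
by move/setP: (e) => /(_ y); rewrite !inE => <-.
Qed.

Lemma sup_lt (r r' : rel S) v : v \in Sup r -> v \notin Sup r' ->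
  (forall x y, r' x y -> x \in Sup r) -> Sup r' \proper Sup r.
Proof.
move=> vin vout h; apply/properP; split; last by exists v.
by apply/subsetP => x; rewrite inE => /existsP [y /h].
Qed.

Lemma inK3 (x v a b : S) : x \in [set v; a; b] -> [\/ x = v, x = a | x = b].
Proof. by rewrite !inE => /orP [/orP [] | ] /eqP ->; [constructor 1 | constructor 2 | constructor 3]. Qed.

Lemma cycles_gen (r : rel S) : symmetric r -> irreflexive r -> degok r ->
  exists cs, dcp (fun x => exists y, r x y) r cs.
Proof.
suff H : forall n (r : rel S), #|Sup r| <= n -> symmetric r -> irreflexive r -> degok r ->
  exists cs, dcp (fun x => exists y, r x y) r cs by move=> *; apply: (H _ r (leqnn _)).
have nil : forall r : rel S, Sup r = set0 -> exists cs, dcp (fun x => exists y, r x y) r cs.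
  move=> r0 E0.
  have rF : forall x y, r0 x y = false.
    move=> x y; apply/negbTE/negP => rxy.
    have : x \in Sup r0 by rewrite inE; apply/existsP; exists y.
    by rewrite E0 inE.
  exists [::]; split => //.
    by move=> x; split; [case => y; rewrite rF | ].
elim=> [|n IH] r0 Hn sym irr deg.
  by apply: nil; apply/eqP; rewrite -cards_eq0 -leqn0.
case: (set_0Vmem (Sup r0)) => [E0 | [v vin]]; first exact: nil.
have [a [b [ab Nv]]] : exists a b, a != b /\ [set y | r0 v y] = [set a; b].
  apply/cards2P; case: (deg v) => [/eqP|-> //].
  rewrite cards_eq0 => /eqP e; move: vin; rewrite inE => /existsP [y ry].
  by move/setP: (e) => /(_ y); rewrite !inE ry.
have rv : forall z, r0 v z = (z == a) || (z == b).
  by move=> z; move/setP: (Nv) => /(_ z); rewrite !inE.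
have rva : r0 v a by rewrite rv eqxx.
have rvb : r0 v b by rewrite rv eqxx orbT.
have va : v != a by apply: contraTneq rva => ->; rewrite irr.
have vb : v != b by apply: contraTneq rvb => ->; rewrite irr.
case rab: (r0 a b).
  have ra : forall z, r0 a z = (z == v) || (z == b).
    by apply: nbr2 deg vb _ rab; rewrite sym.
  have rb : forall z, r0 b z = (z == v) || (z == a).
    by apply: nbr2 deg va _ _; rewrite sym.
  set K := [set v; a; b].
  have cl : forall x y, x \in K -> r0 x y -> y \in K.
    move=> x y /inK3 [] ->; [rewrite rv | rewrite ra | rewrite rb];
      by case/orP => /eqP ->; rewrite /K !inE eqxx ?orbT.
  pose r' := fun x y => [&& r0 x y, x \notin K & y \notin K].
  have r'x : forall x y, x \notin K -> r' x y = r0 x y.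
    move=> x y xK; rewrite /r' xK /=; case rxy: (r0 x y) => //=.
    by apply/negP => yK; move: (cl y x yK); rewrite sym rxy (negbTE xK) => /(_ isT).
  have r'K : forall x y, x \in K -> r' x y = false.
    by move=> x y xK; rewrite /r' xK andbF.
  have [cs' [U A V E]] : exists cs, dcp (fun x => exists y, r' x y) r' cs.
    apply: IH.
    - rewrite -ltnS; apply: leq_trans Hn; apply: proper_card; apply: (sup_lt vin).
        by rewrite inE; apply/existsP => -[y]; rewrite r'K // !inE eqxx.
      by move=> x y /andP [rxy _]; rewrite inE; apply/existsP; exists y.
    - by move=> x y; rewrite /r' sym; case: (x \in K); case: (y \in K); rewrite ?andbF.
    - by move=> x; rewrite /r' irr.
    - move=> x; case xK: (x \in K).
        by left; apply/eqP; rewrite cards_eq0; apply/eqP/setP => y; rewrite !inE r'K.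
      have -> : [set y | r' x y] = [set y | r0 x y].
        by apply/setP => y; rewrite !inE r'x ?xK.
      exact: deg.
  have nK : forall x, x \in K -> x \notin flatten cs'.
    move=> x xK; rewrite mem_flat; apply/negP => /(proj2 (V x)) [y].
    by rewrite r'K.
  have nva := negbTE va; have nvb := negbTE vb; have nab := negbTE ab.
  have nav : (a == v) = false by rewrite eq_sym.
  have nbv : (b == v) = false by rewrite eq_sym.
  have nba : (b == a) = false by rewrite eq_sym.
  exists ([:: v; a; b] :: cs'); split.
  - rewrite /= !inE nva nvb nab /=.
    have := nK v; have := nK a; have := nK b; rewrite !inE !eqxx ?orbT.
    by move=> -> // -> // -> //; rewrite U.
  - by rewrite /= A.
  - move=> x; case xK: (x \in K).
      split=> _.
        by move/inK3: xK => [] -> /=; rewrite !inE eqxx ?orbT.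
      by move/inK3: xK => [] ->; [exists a | exists v | exists v]; rewrite // sym.
    have e1 : (exists y, r0 x y) <-> (exists y, r' x y).
      by split => -[y]; exists y; rewrite ?r'x ?xK // -(r'x x y) ?xK.
    have xs : (x \in [:: v; a; b]) = false by move: xK; rewrite /K !inE orbA => ->.
    apply: (iff_trans e1); apply: (iff_trans (V x)); rewrite /= xs; exact: iff_refl.
  - move=> x y; rewrite /=.
    case xK: (x \in K).
      have -> : has (fun s => cycle_edge s x y) cs' = false.
        apply/negbTE/hasPn => s0 s0in; apply/negP => /and3P [xs0 _ _].
        by move: (nK x xK); rewrite mem_flat => /hasPn /(_ s0 s0in); rewrite xs0.
      rewrite orbF.
      case yK: (y \in K).
        move/inK3: xK => [] ->; move/inK3: yK => [] ->;
        by rewrite /cycle_edge /next /= !inE ?eqxx ?nva ?nvb ?nab ?nav ?nbv ?nba ?irr ?rv ?ra ?rb ?eqxx ?nva ?nvb ?nab ?nav ?nbv ?nba ?orbT ?orbF ?andbT /=.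
      have ys : (y \in [:: v; a; b]) = false by move: yK; rewrite /K !inE orbA => ->.
      rewrite /cycle_edge ys andbF.
      by apply/negbTE/negP => rxy; move: (cl x y xK rxy); rewrite yK.
    have -> : cycle_edge [:: v; a; b] x y = false.
      by rewrite /cycle_edge; move: xK; rewrite /K !inE orbA => ->.
    by rewrite -r'x ?xK // E.
have nrab : ~~ r0 a b by rewrite rab.
pose r' := fun x y => (r0 x y && (x != v) && (y != v)) || ((x == a) && (y == b))
                      || ((x == b) && (y == a)).
have r'v : forall w, ~~ r' v w.
  by move=> w; rewrite /r' eqxx andbF (negbTE va) (negbTE vb).
have r'sym : symmetric r'.
  move=> x y; rewrite /r' sym -!andbA (andbC (x != v)) orbAC (andbC (x == a)) (andbC (x == b)).
  done.
have degc : forall c d, r0 v c -> ~~ r0 c d ->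
    (forall y, r' c y = (y == d) || (r0 c y && (y != v))) -> #|[set y | r' c y]| = 2.
  move=> c d rvc ncd Hc.
  have -> : [set y | r' c y] = d |: ([set y | r0 c y] :\ v).
    by apply/setP => y; rewrite !inE Hc andbC.
  have Nc2 : #|[set y | r0 c y]| = 2.
    case: (deg c) => // /eqP; rewrite cards_eq0 => /eqP e.
    have : v \in [set y | r0 c y] by rewrite inE sym.
    by rewrite e inE.
  have := cardsD1 v [set y | r0 c y]; rewrite Nc2 inE sym rvc add1n => -[e].
  by rewrite cardsU1 !inE negb_and ncd orbT -e.
have [cs2' D'] : exists cs, dcp (fun x => exists y, r' x y) r' cs.
  apply: IH => //.
  - rewrite -ltnS; apply: leq_trans Hn; apply: proper_card; apply: (sup_lt vin).
      by rewrite inE; apply/existsP => -[y]; apply/negP.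
    move=> x y; rewrite inE /r' => /orP [/orP [/andP [/andP [rxy _] _] | ] | ].
    + by apply/existsP; exists y.
    + by case/andP => /eqP -> _; apply/existsP; exists v; rewrite sym.
    + by case/andP => /eqP -> _; apply/existsP; exists v; rewrite sym.
  - move=> x; rewrite /r' irr /=; apply/negbTE/negP => /orP [] /andP [/eqP -> /eqP e].
      by move: ab; rewrite e eqxx.
    by move: ab; rewrite e eqxx.
  - move=> x.
    case: (x =P v) => [-> | /eqP xv].
      left; apply/eqP; rewrite cards_eq0; apply/eqP/setP => y; rewrite !inE.
      exact/negbTE/r'v.
    case: (x =P a) => [-> | /eqP xa].
      right; apply: (degc a b rva nrab) => y.
      by rewrite /r' eqxx (negbTE ab) andFb orbF (eq_sym a v) va andbT orbC.
    case: (x =P b) => [-> | /eqP xb].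
      right; apply: (degc b a rvb); first by rewrite sym.
      move=> y; rewrite /r' eqxx (eq_sym b a) (negbTE ab) andFb orbF (eq_sym b v) vb andbT.
      by rewrite orbC.
    have -> : [set y | r' x y] = [set y | r0 x y].
      apply/setP => y; rewrite !inE /r' (negbTE xa) (negbTE xb) !orbF xv andbT.
      case: (y =P v) => [-> | _]; last by rewrite andbT.
      by rewrite andbF sym rv (negbTE xa) (negbTE xb).
    exact: deg.
have r'ab : r' a b by rewrite /r' !eqxx orbT.
have [x [y [q [cs2 [Hxy D]]]]] := norm D' r'ab.
case/orP: Hxy => /andP [/eqP ex /eqP ey]; subst x y.
- exists ((a :: v :: b :: q) :: cs2).
  apply: (insert_step sym ab rv nrab _ r'v D).
  by [].
- exists ((b :: v :: a :: q) :: cs2).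
  apply: (insert_step sym _ _ _ _ r'v D).
  + by rewrite eq_sym.
  + by move=> z; rewrite rv orbC.
  + by rewrite sym.
  + by move=> z w; rewrite /r' orbAC.
Qed.

End Cyc.

Section Spec.
Variable T : finType.
Variable adj : rel T.

Lemma L1adj_sym (E F : {set T}) : L1adj adj E F = L1adj adj F E.
Proof. by rewrite /L1adj andbCA (eq_sym E) setIC. Qed.

Lemma L2adj_sym (X Y : {set {set T}}) : L2adj adj X Y = L2adj adj Y X.
Proof. by rewrite /L2adj andbCA (eq_sym X) setIC. Qed.

Lemma redadj_sym (X Y : {set {set T}}) : redadj adj X Y = redadj adj Y X.
Proof.
rewrite /redadj L2adj_sym; congr (_ && ~~ _).
apply: eq_existsb => E1; apply: eq_existsb => E2; apply: eq_existsb => E3.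
by rewrite (andbC (X \in _)).
Qed.

Lemma redadj_irr (X : {set {set T}}) : redadj adj X X = false.
Proof. by rewrite /redadj /L2adj eqxx /= !andbF. Qed.

Lemma gedgeP (E : {set T}) : Gedge adj E -> exists x y, adj x y /\ E = [set x; y].
Proof. by case/existsP => x /existsP [y /andP [a /eqP e]]; exists x, y. Qed.

Lemma L1edgeP (V : {set {set T}}) : L1edge adj V ->
  exists E F, L1adj adj E F /\ V = [set E; F].
Proof. by case/existsP => x /existsP [y /andP [a /eqP e]]; exists x, y. Qed.

Lemma rcliqueP (E : {set T}) V : V \in rclique adj E ->
  exists F, L1adj adj E F /\ V = [set E; F].
Proof.
rewrite inE => /andP [/L1edgeP [A [B [hAB ->]]]]; rewrite !inE => /orP [] /eqP ->.
- by exists B.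
- by exists A; rewrite L1adj_sym setUC.
Qed.

Lemma sub2eq (F : {set T}) x y : irreflexive adj -> Gedge adj F -> x != y ->
  x \in F -> y \in F -> F = [set x; y].
Proof.
move=> irr gF xy xF yF; have [p [q [apq eF]]] := gedgeP gF.
apply/eqP; rewrite eq_sym eqEcard; apply/andP; split.
  by apply/subsetP => z; rewrite !inE => /orP [] /eqP ->.
by rewrite eF !cards2 xy; case: (p != q).
Qed.

Lemma geo (E F : {set T}) : simple_graph adj -> cubic adj -> L1adj adj E F ->
  #|[set W | (W \in rclique adj E) && redadj adj [set E; F] W]| <= 2.
Proof.
case=> sym irr cub hEF; have := hEF; rewrite /L1adj => /and4P [gE gF nEF iEF].
have [x [y [axy eE]]] := gedgeP gE.
have xy : x != y by apply: contraTneq axy => ->; rewrite irr.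
have [w [o [eEwo wF oF awo]]] :
    exists w o, [/\ E = [set w; o], w \notin F, o \in F & adj w o].
  case xF: (x \in F).
  - exists y, x; split => //.
    + by rewrite eE setUC.
    + apply/negP => yF; move: nEF; rewrite eE (sub2eq irr gF xy xF yF) eqxx.
      by [].
    + by rewrite sym.
  - exists x, y; split => //; first by rewrite xF.
    move/set0Pn: (iEF) => [z]; rewrite inE eE !inE => /andP [/orP [] /eqP -> zF] //.
    by move: xF; rewrite zF.
set N := [set W | _].
have sub : N \subset [set [set E; [set w; t]] | t in [set t | adj w t] :\ o].
  apply/subsetP => W; rewrite inE => /andP [WE rW].
  have [G [hEG eW]] := rcliqueP WE.
  have := hEG; rewrite /L1adj => /and4P [_ gG nEG iEG].
  have wG : w \in G.
    move/set0Pn: (iEG) => [z]; rewrite inE => /andP [zE zG].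
    move: zE; rewrite eEwo !inE => /orP [] /eqP ez; first by rewrite -ez.
    exfalso; move: rW; rewrite /redadj => /andP [hL /negP]; apply.
    have nFG : F != G.
      apply: contraTneq hL => eFG.
      by rewrite /L2adj eW -eFG eqxx /= !andbF.
    apply/existsP; exists E; apply/existsP; exists F; apply/existsP; exists G.
    rewrite /L1triangle hEF hEG /tri_edges !inE eqxx eW eqxx ?orbT /= andbT.
    rewrite /L1adj gF gG nFG /= andbT; apply/set0Pn; exists o; rewrite inE oF -ez zG.
    by [].
  have [p [t [apt eG]]] := gedgeP gG.
  have [t' [awt eG']] : exists t', adj w t' /\ G = [set w; t'].
    by move: wG; rewrite eG !inE => /orP [] /eqP ->; [exists t | exists p; rewrite setUC sym].
  apply/imsetP; exists t'; last by rewrite eW eG'.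
  rewrite !inE awt andbT.
  by apply: contraNneq nEG => eto; rewrite eEwo eG' eto.
apply: leq_trans (subset_leq_card sub) _.
apply: leq_trans (leq_imset_card _ _) _.
have := cardsD1 o [set t | adj w t]; rewrite (cub w) inE awo => -[]; rewrite add0n => <-.
by [].
Qed.


Lemma O1 (lam : labeling T) (E F : {set T}) :
  simple_graph adj -> cubic adj -> valid_labeling adj lam -> L1adj adj E F ->
  exists W0, [set W | openadj adj lam [set E; F] W && (W \in rclique adj E)] = [set W0].
Proof.
move=> sg cub val hEF.
have gE : Gedge adj E by case/and4P: hEF.
have Vin : [set E; F] \in rclique adj E.
  rewrite inE !inE eqxx andbT; apply/existsP; exists E; apply/existsP; exists F.
  by rewrite hEF eqxx.
have [W [U [WE UE rW rU lWU]]] := val E gE _ Vin.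
have cN := geo sg cub hEF.
have [W0 [W0E rW0 lW0]] : exists W0, [/\ W0 \in rclique adj E,
    redadj adj [set E; F] W0 & lam [set [set E; F]; W0]].
  case lw: (lam [set [set E; F]; W]); first by exists W.
  by exists U; split => //; move: lWU; rewrite lw; case: (lam _).
have [Wc [WcE rWc lWc]] : exists Wc, [/\ Wc \in rclique adj E,
    redadj adj [set E; F] Wc & lam [set [set E; F]; Wc] = false].
  case lw: (lam [set [set E; F]; W]); last by exists W.
  by exists U; split => //; move: lWU; rewrite lw; case: (lam _).
exists W0; apply/setP => W1; rewrite !inE /openadj.
apply/idP/idP => [/andP [/andP [rW1 lW1] W1E] | /eqP ->]; last first.
  by rewrite rW0 lW0; move: W0E; rewrite inE.
have {}W1E : W1 \in rclique adj E by rewrite inE.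
apply/negPn/negP => nW.
have : 2 < #|[set W | (W \in rclique adj E) && redadj adj [set E; F] W]|.
  apply/card_gt2P; exists W1, W0, Wc; split; first by split; rewrite inE ?W1E ?W0E ?WcE.
  split => //; first by apply: contraTneq lW0 => ->; rewrite lWc.
  by apply: contraTneq lW1 => <-; rewrite lWc.
by rewrite ltnNge cN.
Qed.

Lemma degO (lam : labeling T) :
  simple_graph adj -> cubic adj -> valid_labeling adj lam -> degok (openadj adj lam).
Proof.
move=> sg cub val V.
case LV: (L1edge adj V); last first.
  left; apply/eqP; rewrite cards_eq0; apply/eqP/setP => W.
  by rewrite !inE /openadj /redadj /L2adj LV.
have [E [F [hEF eV]]] := L1edgeP LV; subst V.
have [WE hWE] := O1 sg cub val hEF.
have hFE : L1adj adj F E by rewrite L1adj_sym.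
have [WF hWF] := O1 sg cub val hFE; rewrite setUC in hWF.
have inWE : forall W, openadj adj lam [set E; F] W -> W \in rclique adj E -> W = WE.
  move=> W oW WX; have : W \in [set WE] by rewrite -hWE inE oW WX.
  by rewrite inE => /eqP.
have inWF : forall W, openadj adj lam [set E; F] W -> W \in rclique adj F -> W = WF.
  move=> W oW WX; have : W \in [set WF] by rewrite -hWF inE oW WX.
  by rewrite inE => /eqP.
have [oWE WEE] : openadj adj lam [set E; F] WE /\ WE \in rclique adj E.
  have : WE \in [set WE] by rewrite inE.
  by rewrite -hWE inE => /andP [].
have [oWF WFF] : openadj adj lam [set E; F] WF /\ WF \in rclique adj F.
  have : WF \in [set WF] by rewrite inE.
  by rewrite -hWF inE => /andP [].
have spl : forall W, openadj adj lam [set E; F] W -> W \in rclique adj E \/ W \in rclique adj F.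
  move=> W /andP [/andP [hL _] _]; move: hL; rewrite /L2adj => /and4P [_ LW _ /set0Pn [Z]].
  rewrite inE => /andP [ZV ZW]; move: ZV; rewrite !inE => /orP [] /eqP eZ;
    [left | right]; by rewrite ?inE LW -eZ ZW.
right; have -> : [set W | openadj adj lam [set E; F] W] = [set WE; WF].
  apply/setP => W; rewrite !inE; apply/idP/idP.
  - move=> oW; case: (spl W oW) => WX.
      by rewrite (inWE W oW WX) eqxx.
    by rewrite (inWF W oW WX) eqxx orbT.
  - by case/orP => /eqP ->.
rewrite cards2; suff -> : WE != WF by [].
apply/negP => /eqP eq.
have WEF : WE \in rclique adj F by rewrite eq.
have [G [hEG eW]] := rcliqueP WEE.
move: WEF; rewrite inE => /andP [_]; rewrite eW !inE => /orP [] /eqP eFG.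
  by move: hEF; rewrite /L1adj eFG eqxx /= !andbF.
by move: oWE; rewrite eW -eFG /openadj redadj_irr.
Qed.

Lemma openadj_sym (lam : labeling T) : symmetric (openadj adj lam).
Proof. by move=> V W; rewrite /openadj redadj_sym setUC. Qed.

Lemma openadj_irr (lam : labeling T) : irreflexive (openadj adj lam).
Proof. by move=> V; rewrite /openadj redadj_irr. Qed.


End Spec.

Unset Implicit Arguments.

Theorem lemma2p4 (T : finType) (adj : rel T) (lam : labeling T) :
  simple_graph adj -> connected_graph adj -> bridgeless adj ->
  triangle_free adj -> cubic adj ->
  valid_labeling adj lam ->
  disjoint_union_of_cycles
    (fun V => exists W, openadj adj lam V W) (openadj adj lam).
Proof.
move=> sg _ _ _ cub val.
have [cs D] := cycles_gen (@openadj_sym _ adj lam) (@openadj_irr _ adj lam) (degO sg cub val).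
by exists cs.
Qed.
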